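(* Let $(\mathcal{X},d)$ be a metric space with the following barycenter property: for every $K\ge1$, every $\boldsymbol{w}\in\Delta^{K-1}$ and every $\boldsymbol{a}=(a_1,\dots,a_K)\in\mathcal{X}^K$ the function $C\mapsto\sum_{s=1}^K w_s d^2(a_s,C)$ attains its minimum on $\mathcal{X}$. Let $\boldsymbol{a}=(a_1,\dots,a_K)\in\mathcal{X}^K$, $\boldsymbol{w}\in\Delta^{K-1}$, and let $C_{\boldsymbol{a}}\in\arg\min_{C\in\mathcal{X}}\sum_{s=1}^K w_s d^2(a_s,C)$. Fix $\alpha\in[0,1]$ and assume $\boldsymbol{b}=(b_1,\dots,b_K)\in\mathcal{X}^K$ satisfies, for all $s=1,\dots,K$, $$d(a_s,C_{\boldsymbol{a}})=d(a_s,b_s)+d(b_s,C_{\boldsymbol{a}}),\qquad d(b_s,a_s)=(1-\alpha^{1/2})\,d(a_s,C_{\boldsymbol{a}}).$$ Then $\boldsymbol{b}$ is a solution of $$\inf_{\boldsymbol{b}'\in\mathcal{X}^K}\Big\{\sum_{s=1}^K w_s d^2(b'_s,a_s)\;:\;\min_{C\in\mathcal{X}}\sum_{s=1}^K w_s d^2(b'_s,C)\le\alpha\sum_{s=1}^K w_s d^2(a_s,C_{\boldsymbol{a}})\Big\}.$$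
   Context: $\Delta^{K-1}$ denotes the probability simplex in $\mathbb{R}^K$. In the constraint, $\min_{C}\sum_s w_s d^2(b'_s,C)$ equals $\sum_s w_s d^2(b'_s,C_{\boldsymbol{b}'})$ for any weighted barycenter $C_{\boldsymbol{b}'}$ of $\boldsymbol{b}'$. *)

(* Defs.v *)
From HB Require Import structures.
From mathcomp Require Import all_boot all_order all_algebra.
From mathcomp Require Import reals.
Set Implicit Arguments. Unset Strict Implicit. Unset Printing Implicit Defensive.
Import Order.TTheory GRing.Theory Num.Theory.
Local Open Scope ring_scope.

Definition is_metric (R : realType) (X : Type) (d : X -> X -> R) : Prop :=
  [/\ (forall x y, 0 <= d x y),
      (forall x y, d x y = 0 <-> x = y),
      (forall x y, d x y = d y x) &
      (forall x y z, d x z <= d x y + d y z)].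

Definition in_simplex (R : realType) (K : nat) (w : 'I_K -> R) : Prop :=
  (forall s, 0 <= w s) /\ \sum_(s < K) w s = 1.

Definition wcost (R : realType) (X : Type) (d : X -> X -> R) (K : nat)
  (w : 'I_K -> R) (a : 'I_K -> X) (C : X) : R :=
  \sum_(s < K) w s * d (a s) C ^+ 2.

Definition is_barycenter (R : realType) (X : Type) (d : X -> X -> R) (K : nat)
  (w : 'I_K -> R) (a : 'I_K -> X) (C : X) : Prop :=
  forall C', wcost d w a C <= wcost d w a C'.

Definition barycenter_property (R : realType) (X : Type) (d : X -> X -> R) : Prop :=
  forall (K : nat), (1 <= K)%N -> forall (w : 'I_K -> R) (a : 'I_K -> X),
    in_simplex w -> exists C, is_barycenter d w a C.

Definition feasible (R : realType) (X : Type) (d : X -> X -> R) (K : nat)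
  (w : 'I_K -> R) (t : R) (b : 'I_K -> X) : Prop :=
  exists C, is_barycenter d w b C /\ wcost d w b C <= t.

Definition objective (R : realType) (X : Type) (d : X -> X -> R) (K : nat)
  (w : 'I_K -> R) (a b : 'I_K -> X) : R :=
  \sum_(s < K) w s * d (b s) (a s) ^+ 2.

Definition solves (R : realType) (X : Type) (d : X -> X -> R) (K : nat)
  (w : 'I_K -> R) (a : 'I_K -> X) (t : R) (b : 'I_K -> X) : Prop :=
  feasible d w t b /\
  forall b' : 'I_K -> X, feasible d w t b' -> objective d w a b <= objective d w a b'.

(* Main.v *)
Require Import Defs.
From HB Require Import structures.
From mathcomp Require Import all_boot all_order all_algebra.
From mathcomp Require Import reals.
From mathcomp Require Import ring lra.
Import Order.TTheory GRing.Theory Num.Theory.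
Local Open Scope ring_scope.

Lemma key (R : realType) (p q u x y : R) : 0 <= p -> 0 <= q -> p + q = 1 -> 0 <= u -> u <= x + y ->
  p * q * u ^+ 2 <= q * x ^+ 2 + p * y ^+ 2.
Proof.
move=> hp hq hpq hu hxy.
have h1 : u ^+ 2 <= (x + y) ^+ 2 by nra.
have h2 : 0 <= p * q by rewrite mulr_ge0.
have h3 : p * q * u ^+ 2 <= p * q * (x + y) ^+ 2 by rewrite ler_wpM2l.
have h4 : 0 <= (q * x - p * y) ^+ 2 by rewrite sqr_ge0.
have -> : q * x ^+ 2 + p * y ^+ 2 = p * q * (x + y) ^+ 2 + (q * x - p * y) ^+ 2.
  have -> : q = 1 - p by rewrite -hpq; ring.
  ring.
lra.
Qed.

Theorem lemma1 (R : realType) (X : Type) (d : X -> X -> R)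
  (hd : is_metric d) (hbary : barycenter_property d)
  (K : nat) (hK : (1 <= K)%N) (w : 'I_K -> R) (hw : in_simplex w)
  (a : 'I_K -> X) (Ca : X) (hCa : is_barycenter d w a Ca)
  (alpha : R) (halpha : 0 <= alpha <= 1) (b : 'I_K -> X)
  (hb1 : forall s, d (a s) Ca = d (a s) (b s) + d (b s) Ca)
  (hb2 : forall s, d (b s) (a s) = (1 - Num.sqrt alpha) * d (a s) Ca) :
  solves d w a (alpha * wcost d w a Ca) b.
Proof.
case: hd => hpos hzero hsym htri.
case/andP: halpha => ha0 ha1.
have hw0 := hw.1.
set be := Num.sqrt alpha in hb2 *.
have hbe0 : 0 <= be by rewrite sqrtr_ge0.
have hbe2 : be ^+ 2 = alpha by rewrite sqr_sqrtr.
have hbe1 : be <= 1 by nra.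
have hbC : forall s, d (b s) Ca = be * d (a s) Ca.
  move=> s; have := hb1 s; rewrite [d (a s) (b s)]hsym hb2; lra.
set D := wcost d w a Ca.
have hobj : objective d w a b = (1 - be) ^+ 2 * D.
  rewrite /objective /D /wcost mulr_sumr; apply: eq_bigr => s _.
  rewrite hb2; ring.
split.
  have [C hC] := hbary K hK w b hw.
  exists C; split => //; apply: (le_trans (hC Ca)).
  rewrite /wcost /D /wcost mulr_sumr le_eqVlt; apply/orP; left; apply/eqP.
  apply: eq_bigr => s _; rewrite hbC -hbe2; ring.
move=> b' [C' [hC' hcost]].
rewrite hobj.
have hD : D <= wcost d w a C' := hCa C'.
have hD0 : 0 <= D by rewrite /D /wcost sumr_ge0 // => s _; rewrite mulr_ge0 ?sqr_ge0.
set Y := wcost d w b' C' in hcost.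
set Xo := objective d w a b'.
have hY0 : 0 <= Y by rewrite /Y /wcost sumr_ge0 // => s _; rewrite mulr_ge0 ?sqr_ge0.
have tri : forall s, d (a s) C' <= d (b' s) (a s) + d (b' s) C'.
  by move=> s; rewrite [d (b' s) (a s)]hsym; apply: htri.
have [hbz|hbpos] := eqVneq be 0.
  have al0 : alpha = 0 by rewrite -hbe2 hbz expr0n.
  rewrite hbz subr0 expr1n mul1r.
  apply: (le_trans hD).
  have hY : Y = 0 by apply: le_anti; rewrite hY0 andbT; move: hcost; rewrite al0 mul0r.
  have ht := psumr_eq0P (fun s _ => mulr_ge0 (hw0 s) (sqr_ge0 (d (b' s) C'))) hY.
  rewrite /wcost /Xo /objective; apply: ler_sum => s _.
  have e1 := ht s isT.
  have e2 : w s * d (b' s) C' = 0.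
    apply/eqP; rewrite -sqrf_eq0; apply/eqP.
    have -> : (w s * d (b' s) C') ^+ 2 = w s * (w s * d (b' s) C' ^+ 2) by ring.
    by rewrite e1 mulr0.
  have u0 := hpos (a s) C'.
  have h1 : d (a s) C' ^+ 2 <= (d (b' s) (a s) + d (b' s) C') ^+ 2 by have := tri s; nra.
  have h2 : w s * d (a s) C' ^+ 2 <= w s * (d (b' s) (a s) + d (b' s) C') ^+ 2.
    by rewrite ler_wpM2l.
  apply: (le_trans h2).
  have -> : w s * (d (b' s) (a s) + d (b' s) C') ^+ 2 = w s * d (b' s) (a s) ^+ 2 + (w s * d (b' s) C') * (2 * d (b' s) (a s) + d (b' s) C') by ring.
  by rewrite e2 mul0r addr0.
have hbp : 0 < be by rewrite lt0r hbpos hbe0.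
set p := 1 - be.
have hp0 : 0 <= p by rewrite /p subr_ge0.
have hsum : p * be * wcost d w a C' <= be * Xo + p * Y.
  rewrite /wcost /Xo /objective /Y /wcost !mulr_sumr -big_split /=.
  apply: ler_sum => s _.
  have := @key R _ _ _ _ _ hp0 hbe0 (subrK be 1) (hpos (a s) C') (tri s).
  move=> hk.
  have := ler_wpM2l (hw0 s) hk.
  move=> hk2.
  apply: le_trans (le_trans hk2 _); first by rewrite le_eqVlt; apply/orP; left; apply/eqP; ring.
  by rewrite le_eqVlt; apply/orP; left; apply/eqP; ring.
have h1 : p * be * D <= p * be * wcost d w a C' by rewrite ler_wpM2l // mulr_ge0.
have h3 : p * Y <= p * (alpha * D) by rewrite ler_wpM2l.
have h4 : be * (p ^+ 2 * D) <= be * Xo.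
  have e : be * (p ^+ 2 * D) = p * be * D - p * (alpha * D) by rewrite -hbe2 /p; ring.
  rewrite e; lra.
by rewrite -(ler_pM2l hbp).
Qed.
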